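(* Let $n\ge2$ and $k\ge 3$ be integers, $x>0$ and $\alpha_1,\dots,\alpha_{k-2}\in\mathbb{R}$. Then $\det A_{n;k}(x,x^{\alpha_1},\dots,x^{\alpha_{k-2}})=\det A_{n;k}(x,x^{1-\alpha_{k-2}},\dots,x^{1-\alpha_1})$.
   Context: For an integer $n\ge 2$ and $y\ge0$, $y\neq 1$, let $k_n(y)=\frac1n\sum_{l=1}^{n}\frac{1-y\cos(2\pi l/n)}{(1+y^2-2y\cos(2\pi l/n))^{3/2}}-1$, and set $k_n(1)=\delta_n:=\frac{1}{4n}\sum_{l=1}^{n-1}\frac{1}{\sin(\pi l/n)}-1$. For $x_1,\dots,x_{k-1}>0$ and $x_k:=1$, $A_{n;k}(x_1,\dots,x_{k-1})$ is the $k\times k$ matrix whose $(i,j)$ entry is $k_n(x_j/x_i)$ (so diagonal entries equal $\delta_n$). *)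

(* Defs.v *)
From HB Require Import structures.
From mathcomp Require Import all_boot all_order all_algebra.
From mathcomp Require Import all_classical all_reals all_analysis.
Set Implicit Arguments. Unset Strict Implicit. Unset Printing Implicit Defensive.
Import Order.TTheory GRing.Theory Num.Theory.
Local Open Scope ring_scope.

Definition delta_n (R : realType) (n : nat) : R :=
  (4 * n%:R)^-1 * (\sum_(1 <= l < n) (sin (pi * l%:R / n%:R))^-1) - 1.

Definition k_n (R : realType) (n : nat) (y : R) : R :=
  if y == 1 then delta_n R n
  else (n%:R)^-1 * (\sum_(1 <= l < n.+1)
          ((1 - y * cos (2 * pi * l%:R / n%:R)) /
           powR (1 + y ^+ 2 - 2 * y * cos (2 * pi * l%:R / n%:R)) (3 / 2))) - 1.

(* A_{n;k}(x_1,...,x_{k-1}): x is 1-based (x 1, ..., x (k-1) used), x_k := 1;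
   entry (i,j) (0-based) is k_n(x_{j+1} / x_{i+1}). *)
Definition A_nk (R : realType) (n k : nat) (x : nat -> R) : 'M[R]_k :=
  let xx := fun i : nat => if i == k then 1 else x i in
  \matrix_(i < k, j < k) k_n n (xx j.+1 / xx i.+1).

(* Main.v *)
Require Import Defs.
From HB Require Import structures.
From mathcomp Require Import all_boot all_order all_algebra.
From mathcomp Require Import all_classical all_reals all_analysis.
From mathcomp Require Import fingroup perm zify.
Import Order.TTheory GRing.Theory Num.Theory.
Local Open Scope ring_scope.

Lemma det_rc_perm (R : comUnitRingType) m (s : {perm 'I_m}) (A : 'M[R]_m) :
  \det (row_perm s (col_perm s A)) = \det A.
Proof.
rewrite row_permE col_permE !det_mulmx !det_perm odd_permV.
by rewrite mulrC -mulrA -signr_addb addbb expr0 mulr1.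
Qed.

Theorem lemma6 (R : realType) (n k : nat) (x : R) (alpha : nat -> R) :
  (2 <= n)%N -> (3 <= k)%N -> 0 < x ->
  \det (A_nk n k (fun i => if i == 1%N then x else powR x (alpha (i - 1)%N))) =
  \det (A_nk n k (fun i => if i == 1%N then x else powR x (1 - alpha (k - i)%N))).
Proof.
move=> hn hk hx.
set f1 := (fun i => _ : R).
set f2 := (fun i => _ : R).
pose r (i : 'I_k) := if i.+1 == k then 1 else f1 i.+1.
pose s (i : 'I_k) := if i.+1 == k then 1 else f2 i.+1.
have hx0 : x != 0 by rewrite gt_eqF.
have hs : forall i, s i = x / r (rev_ord i).
  move=> [m hm]; rewrite /s /r /f1 /f2 /=.
  have [->|hm0] := eqVneq m 0%N.
    rewrite /= subn1 prednK ?(leq_trans _ hk) // eqxx.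
    by rewrite ifN ?divr1 // neq_ltn (leq_trans _ hk).
  have [hmk|hmk] := eqVneq m.+1 k.
    by rewrite -hmk subSS subnn /= ifN ?divff // eqSS eq_sym.
  have h1 : (k - m.+1).+1 != k by lia.
  have hmk2 : (m.+1 < k)%N by rewrite ltn_neqAle hmk.
  have h2 : (k - m.+1).+1 != 1%N by lia.
  have h3 : m.+1 != 1%N by lia.
  rewrite (negbTE h1) (negbTE h2) (negbTE h3).
  rewrite powRB; last by rewrite hx0 implybT.
  rewrite powRr1 ?ltW // subn1 /=.
  by [].
pose p := perm (@rev_ord_inj k).
have -> : A_nk n k f2 = row_perm p (col_perm p (A_nk n k f1)^T).
  apply/matrixP => i j; rewrite !mxE !permE.
  rewrite -/(s j) -/(s i) -/(r _) -/(r _) !hs.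
  congr k_n.
  by rewrite invf_div mulrC -!mulrA mulKf.

by rewrite det_rc_perm det_tr.
Qed.
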